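(* Let $(E,C)$ be a finite bipartite separated graph and $H\in\mathcal H(E,C)$. Put $$H_1:=\bigcup\{s_1(X(x)):x\in E^1,\ s(x)\in H\}\ \cup\ (H\cap E_1^{0,0}).$$ Then $H_1\in\mathcal H(E_1,C^1)$, and $H\cup H_1\in\mathcal H(F_1,D^1)$ is the hereditary closure of $H$ inside $(F_1,D^1)$.
   Context: A separated graph $(E,C)$: directed graph $E=(E^0,E^1,r,s)$ with $C=\bigsqcup_vC_v$, $C_v$ a partition of $r^{-1}(v)$ into non-empty sets. Finite bipartite: $E$ finite, $E^0=E^{0,0}\sqcup E^{0,1}$, $s(E^1)=E^{0,1}$, $r(E^1)=E^{0,0}$. Write $C_u=\{X^u_1,\dots,X^u_{k_u}\}$ for $u\in E^{0,0}$. $(E_1,C^1)$ has $E_1^{0,0}=E^{0,1}$, $E_1^{0,1}=\{v(x_1,\dots,x_{k_u}):u\in E^{0,0},x_j\in X^u_j\}$, edges $\alpha^{x_i}(x_1,\dots,\widehat{x_i},\dots,x_{k_u})$ ($1\le i\le k_u$) with range $r_1=s(x_i)$ and source $s_1=v(x_1,\dots,x_{k_u})$, and $C^1_v=\{X(x):x\in s^{-1}(v)\}$ where $X(x_i)=\{\alpha^{x_i}(x_1,\dots,\widehat{x_i},\dots,x_{k_u}):x_j\in X^u_j\ (j\ne i)\}$. $(F_1,D^1)$ is the separated graph $(E,C)\cup(E_1,C^1)$ obtained by identifying $E^{0,1}$ with $E_1^{0,0}$. For a separated graph $(F,D)$, $H\subseteq F^0$ is hereditary if $r(e)\in H$ implies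 $s(e)\in H$, and $D$-saturated if, for $v\in F^0$ and $X\in D_v$, $s(X)\subseteq H$ implies $v\in H$; $\mathcal H(F,D)$ denotes the set of hereditary $D$-saturated subsets. *)

(* Defs.v *)
From HB Require Import structures.
From mathcomp Require Import all_boot.
Set Implicit Arguments. Unset Strict Implicit. Unset Printing Implicit Defensive.

(* A separated graph on vertex type V and edge type E: range r, source s,
   and for each vertex v a set C v of subsets of r^{-1}(v). *)
Section SepGraph.
Variables (V E : finType) (r s : E -> V) (C : V -> {set {set E}}).

(* C v is a partition of r^{-1}(v) into non-empty sets (mathcomp's
   [partition] includes that the blocks are non-empty). *)
Definition is_sep_graph : Prop := forall v : V, partition (C v) [set e | r e == v].

Definition hereditary (H : {set V}) : Prop :=
  forall e : E, r e \in H -> s e \in H.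

(* Vs is the vertex set of the graph (a subset of the ambient type V). *)
Definition saturated (Vs H : {set V}) : Prop :=
  forall v, v \in Vs -> forall X, X \in C v -> s @: X \subset H -> v \in H.

Definition hered_sat (Vs H : {set V}) : Prop :=
  [/\ H \subset Vs, hereditary H & saturated Vs H].

Definition hered_closure (Vs H K : {set V}) : Prop :=
  [/\ H \subset K, K \subset Vs, hereditary K &
      forall K' : {set V}, K' \subset Vs -> hereditary K' -> H \subset K' -> K \subset K'].
End SepGraph.

(* The construction (E_1, C^1) and (F_1, D^1) from a bipartite (E, C)
   with E^{0,0} = V0 and E^{0,1} = ~: V0. *)
Section Construction.
Local Unset Implicit Arguments.
Variables (V E : finType) (r s : E -> V) (C : V -> {set {set E}}) (V0 : {set V}).

(* T = {x_1,...,x_{k_u}} with x_j in X^u_j: T ⊆ r^{-1}(u) meets every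
   X in C_u in exactly one edge. *)
Definition transversal (u : V) (T : {set E}) : bool :=
  (T \subset [set e | r e == u]) && [forall X in C u, #|T :&: X| == 1].

(* E_1^{0,1}: the vertices v(x_1,...,x_{k_u}), encoded as (u, {x_1..x_k}). *)
Definition W1 : finType := {p : V * {set E} | (p.1 \in V0) && transversal p.1 p.2}.

(* Edges of E_1: alpha^{x}(others) with x in the tuple, encoded as (w, x). *)
Definition Ed1 : finType := {q : W1 * E | q.2 \in (val q.1).2}.

(* Vertices of F_1 (and ambient type for E_1): E^0 ⊔ E_1^{0,1},
   with E_1^{0,0} = E^{0,1} embedded via inl. *)
Definition VF : finType := (V + W1)%type.
Definition EF : finType := (E + Ed1)%type.

Definition r1 (q : Ed1) : VF := inl (s (val q).2).
Definition s1 (q : Ed1) : VF := inr (val q).1.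

Definition X1 (x : E) : {set Ed1} := [set q : Ed1 | (val q).2 == x].

Definition C1 (v : VF) : {set {set Ed1}} :=
  match v with
  | inl v => [set X1 x | x in [set x : E | s x == v]]
  | inr _ => set0
  end.

Definition V1s : {set VF} :=
  [set (inl v : VF) | v in ~: V0] :|: [set (inr w : VF) | w in [set: W1]].

Definition rF (e : EF) : VF :=
  match e with inl e => inl (r e) | inr q => r1 q end.
Definition sF (e : EF) : VF :=
  match e with inl e => inl (s e) | inr q => s1 q end.

Definition DF (v : VF) : {set {set EF}} :=
  match v with
  | inl v0 => [set [set (inl e : EF) | e in X] | X : {set E} in C v0]
              :|: [set [set (inr q : EF) | q in X] | X : {set Ed1} in C1 (inl v0)]
  | inr _ => set0
  end.

Definition embH (H : {set V}) : {set VF} := [set (inl v : VF) | v in H].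

Definition H1 (H : {set V}) : {set VF} :=
  (\bigcup_(x | s x \in H) (s1 @: X1 x)) :|: [set (inl v : VF) | v in H :\: V0].
End Construction.

(* Main.v *)
Require Import Defs.
From HB Require Import structures.
From mathcomp Require Import all_boot.

Lemma core (V E : finType) (r s : E -> V) (C : V -> {set {set E}})
  (V0 : {set V})
  (hC : @is_sep_graph V E r C)
  (hbip : forall e : E, r e \in V0 /\ s e \notin V0)
  (H : {set V}) (hH : @hered_sat V E r s C [set: V] H) (x : E) :
  s1 V E r C V0 @: X1 V E r C V0 x \subset H1 V E r s C V0 H -> s x \in H.
Proof.
move=> hsub; apply/negPn/negP => hx.
case: hH => _ hher hsat.
set u := r x.
have hu : u \notin H by apply/negP => /hher; rewrite (negbTE hx).
have hex : forall X, X \in C u -> exists2 y, y \in X & s y \notin H.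
  move=> X XC; apply/exists_inP.
  case: (boolP [exists y in X, s y \notin H]) => // hne; exfalso.
  have hall : forall y, y \in X -> ~~ (s y \notin H).
    move=> y yX; apply/negP => hy; move/negP: hne; apply; apply/exists_inP; by exists y.
  have : u \in H.
    apply: (hsat u (in_setT u) X XC); apply/subsetP => z /imsetP [y yX ->].
    by have := hall y yX; rewrite negbK.
  by rewrite (negbTE hu).
pose g (X : {set E}) : E := if x \in X then x else
  if [pick y in X | s y \notin H] is Some y then y else x.
have gH : forall X, s (g X) \notin H.
  move=> X; rewrite /g; case: ifP => // _; case: pickP => // y /andP[] //.
have gX : forall X, X \in C u -> g X \in X.
  move=> X XC; rewrite /g; case: ifP => // _; case: pickP => [y /andP[] //|].
  move=> hn; case: (hex X XC) => y yX ys; by have := hn y; rewrite yX ys.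
have [/eqP hcov htriv _] := and3P (hC u).
pose T := [set y | (y \in cover (C u)) && (g (pblock (C u) y) == y)].
have hTX : forall X, X \in C u -> T :&: X = [set g X].
  move=> X XC; apply/setP => y; rewrite !inE.
  case yX: (y \in X).
    have ycov : y \in cover (C u) by apply/bigcupP; exists X.
    by rewrite ycov (def_pblock htriv XC yX) andbT eq_sym.
  rewrite andbF; apply/esym/negbTE; apply/negP => /eqP ey.
  by move: (gX X XC); rewrite -ey yX.
have xcov : x \in cover (C u) by rewrite hcov inE.
have xT : x \in T.
  rewrite inE xcov /= /g mem_pblock xcov //.
have htr : Defs.transversal V E r C u T.
  apply/andP; split.
    apply/subsetP => y; rewrite !inE => /andP[]; rewrite hcov inE; by move=> ->.
  by apply/forall_inP => X XC; rewrite hTX // cards1.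
have wP : ((u, T).1 \in V0) && Defs.transversal V E r C (u, T).1 (u, T).2.
  by rewrite /= htr andbT; case: (hbip x).
pose w : W1 V E r C V0 := exist _ (u, T) wP.
have qP : (w, x).2 \in (val (w, x).1).2 by [].
pose q : Ed1 V E r C V0 := exist _ (w, x) qP.
have : s1 V E r C V0 q \in H1 V E r s C V0 H.
  by apply: (subsetP hsub); apply: imset_f; rewrite inE.
rewrite /H1 inE => /orP [].
  move=> /bigcupP [y sy /imsetP [q' q'X]].
  rewrite /s1 /= => [[ew]].
  move: q'X; rewrite inE => /eqP ey.
  have := valP q'; rewrite ey -ew /= inE => /andP [_ /eqP ty].
  by move: (gH (pblock (C u) y)); rewrite ty sy.
by move=> /imsetP [v _].
Qed.

Theorem lemma5 (V E : finType) (r s : E -> V) (C : V -> {set {set E}})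
  (V0 : {set V})
  (hC : @is_sep_graph V E r C)
  (hbip : forall e : E, r e \in V0 /\ s e \notin V0)
  (H : {set V}) (hH : @hered_sat V E r s C [set: V] H) :
  [/\ @hered_sat (VF V E r C V0) (Ed1 V E r C V0)
        (r1 V E r s C V0) (s1 V E r C V0) (C1 V E r s C V0)
        (V1s V E r C V0) (H1 V E r s C V0 H),
      @hered_sat (VF V E r C V0) (EF V E r C V0)
        (rF V E r s C V0) (sF V E r s C V0) (DF V E r s C V0)
        [set: VF V E r C V0]
        (embH V E r C V0 H :|: H1 V E r s C V0 H)
    & @hered_closure (VF V E r C V0) (EF V E r C V0)
        (rF V E r s C V0) (sF V E r s C V0) [set: VF V E r C V0]
        (embH V E r C V0 H) (embH V E r C V0 H :|: H1 V E r s C V0 H)].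
Proof.
have hc := @core V E r s C V0 hC hbip H hH.
case: hH => _ hher hsat.
have inlH1 : forall v, ((inl v : VF V E r C V0) \in H1 V E r s C V0 H) = (v \in H :\: V0).
  move=> v; rewrite /H1 inE; apply/idP/idP.
    case/orP => [/bigcupP [y _ /imsetP [q _ //]]|/imsetP [v' v'H [->]] //].
  by move=> hv; apply/orP; right; apply: imset_f.
have inlE : forall v, ((inl v : VF V E r C V0) \in embH V E r C V0 H) = (v \in H).
  move=> v; apply/idP/idP; first by case/imsetP => v' ? [->].
  by move=> hv; apply: imset_f.
have inrE : forall w, ((inr w : VF V E r C V0) \in embH V E r C V0 H) = false.
  by move=> w; apply/negbTE/negP => /imsetP [? _].
have inrH1 : forall q x, q \in X1 V E r C V0 x -> s x \in H ->
    s1 V E r C V0 q \in H1 V E r s C V0 H.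
  move=> q x qX sx; rewrite /H1 inE; apply/orP; left; apply/bigcupP; exists x => //.
  exact: imset_f.
have inlK : forall v, ((inl v : VF V E r C V0) \in embH V E r C V0 H :|: H1 V E r s C V0 H)
   = (v \in H).
  by move=> v; rewrite inE inlE inlH1 inE; case: (v \in H); rewrite ?andbF ?orbF.
have herF : hereditary (rF V E r s C V0) (sF V E r s C V0)
            (embH V E r C V0 H :|: H1 V E r s C V0 H).
  case=> [e|q] /=; first by rewrite !inlK; apply: hher.
  rewrite /r1 inlK => sx; rewrite inE; apply/orP; right.
  by apply: (inrH1 q (val q).2) => //; rewrite inE.
split.
- split.
  + apply/subsetP => v; rewrite /H1 inE => /orP [].
      move=> /bigcupP [y _ /imsetP [q _ ->]]; rewrite /V1s inE; apply/orP; right.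
      by apply: imset_f; rewrite inE.
    case/imsetP => v'; rewrite inE => /andP [nv _] ->; rewrite /V1s inE; apply/orP; left.
    by apply: imset_f; rewrite inE.
  + move=> q; rewrite /r1 inlH1 inE => /andP [_ sx].
    by apply: (inrH1 q (val q).2) => //; rewrite inE.
  + case=> [v|w] hv X; last by rewrite /C1 inE.
    rewrite /C1 => /imsetP [x]; rewrite inE => /eqP sxv -> hsub.
    have := hc x hsub; rewrite inlH1 sxv inE => ->; rewrite andbT.
    by rewrite -sxv; case: (hbip x).
- split => //.
  case=> [v|w] _ X; last by rewrite /DF inE.
  rewrite /DF inE => /orP [].
    case/imsetP => X' X'C -> hsub; rewrite inlK.
    apply: (hsat v (in_setT v) X' X'C); apply/subsetP => z /imsetP [e eX ->].
    rewrite -inlK; apply: (subsetP hsub); apply/imsetP; exists (inl e) => //.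
    exact: imset_f.
  case/imsetP => X'' /imsetP [x]; rewrite inE => /eqP sxv -> -> hsub.
  rewrite inlK -sxv; apply: hc; apply/subsetP => z /imsetP [q qX ->].
  have : sF V E r s C V0 (inr q) \in embH V E r C V0 H :|: H1 V E r s C V0 H.
    by apply: (subsetP hsub); apply: imset_f; apply: imset_f.
  by rewrite inE /= /s1 inrE.
- split => //; first exact: subsetUl.
  move=> K' _ hK' hsub; apply/subsetP => v; rewrite inE => /orP [].
    exact: (subsetP hsub).
  rewrite /H1 inE => /orP [].
    move=> /bigcupP [x sx /imsetP [q qX ->]].
    have := hK' (inr q); rewrite /= /r1; apply; apply: (subsetP hsub).
    by move: qX; rewrite inE => /eqP ->; rewrite inlE.
  case/imsetP => v'; rewrite inE => /andP [_ hv'] ->.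
  by apply: (subsetP hsub); rewrite inlE.
Qed.
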